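(* Given the data-dictionary $\mathcal{D}_{N_\mathrm{d}}=\{u_k,p_k,x_k\}_{k=1}^{N_\mathrm{d}}$ measured from the LPV system $x_{k+1}=A(p_k)x_k+B(p_k)u_k$ (with affine dependence $A(p)=A_0+\sum_{i=1}^{n_\mathrm{p}}p_iA_i$, $B(p)=B_0+\sum_{i=1}^{n_\mathrm{p}}p_iB_i$) and satisfying the persistency of excitation condition that $D_\mathrm{p}:=\begin{bmatrix} X^\top & (X^\mathrm{p})^\top & U^\top & (U^\mathrm{p})^\top\end{bmatrix}^\top$ has full row rank $(1+n_\mathrm{p})(n_\mathrm{x}+n_\mathrm{u})$. For an LPV controller $u_k=K(p_k)x_k$ with $K(p)=K_0+\sum_{i=1}^{n_\mathrm{p}}p_iK_i$ and $\bar{K}=\begin{bmatrix}K_1 & \cdots & K_{n_\mathrm{p}}\end{bmatrix}$, the closed-loop system $x_{k+1}=(A(p_k)+B(p_k)K(p_k))x_k$ is represented equivalently as \[ x_{k+1}=X_+\mathcal{V}\begin{bmatrix} x_k\\ p_k\otimes x_k\\ p_k\otimes p_k\otimes x_k\end{bmatrix}, \] where $\mathcal{V}\in\mathbb{R}^{(N_\mathrm{d}-1)\times n_\mathrm{x}(1+n_\mathrm{p}+n_\mathrm{p}^2)}$ is any matrix that satisfies \[ \mathcal{M}_\mathrm{CL}:=\begin{bmatrix} I_{n_\mathrm{x}} & 0 & 0\\ 0 & I_{n_\mathrm{p}}\otimes I_{n_\mathrm{x}} & 0\\ K_0 & \bar{K} & 0\\ 0 & I_{n_\mathrm{p}}\otimes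 K_0 & I_{n_\mathrm{p}}\otimes\bar{K}\end{bmatrix}=\begin{bmatrix} X\\ X^\mathrm{p}\\ U\\ U^\mathrm{p}\end{bmatrix}\mathcal{V}. \]
   Context: Discrete-time LPV system $x_{k+1}=A(p_k)x_k+B(p_k)u_k$, $y_k=x_k$, with $x_k\in\mathbb{R}^{n_\mathrm{x}}$, $u_k\in\mathbb{R}^{n_\mathrm{u}}$, $p_k\in\mathbb{P}\subset\mathbb{R}^{n_\mathrm{p}}$ ($\mathbb{P}$ compact and convex), and $A,B$ affine in $p$. From the measured data $\mathcal{D}_{N_\mathrm{d}}=\{u^\mathrm{d}_k,p^\mathrm{d}_k,x^\mathrm{d}_k\}_{k=1}^{N_\mathrm{d}}$ the data matrices are $U=\begin{bmatrix}u^\mathrm{d}_1 & \cdots & u^\mathrm{d}_{N_\mathrm{d}-1}\end{bmatrix}$, $U^\mathrm{p}=\begin{bmatrix}p^\mathrm{d}_1\otimes u^\mathrm{d}_1 & \cdots & p^\mathrm{d}_{N_\mathrm{d}-1}\otimes u^\mathrm{d}_{N_\mathrm{d}-1}\end{bmatrix}$, $X=\begin{bmatrix}x^\mathrm{d}_1 & \cdots & x^\mathrm{d}_{N_\mathrm{d}-1}\end{bmatrix}$, $X^\mathrm{p}=\begin{bmatrix}p^\mathrm{d}_1\otimes x^\mathrm{d}_1 & \cdots & p^\mathrm{d}_{N_\mathrm{d}-1}\otimes x^\mathrm{d}_{N_\mathrm{d}-1}\end{bmatrix}$, $X_+=\begin{bmatrix}x^\mathrm{d}_2 & \cdots & x^\mathrm{d}_{N_\mathrm{d}}\end{bmatrix}$;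 $\otimes$ is the Kronecker product. *)

(* Defs.v *)
(* Kronecker product = tensmx (A *t B) from mathcomp real_closed mxtens,
   with the standard convention (A *t B) (i*p+k) (j*q+l) = A i j * B k l. *)
From HB Require Import structures.
From mathcomp Require Import all_boot all_order all_algebra.
From mathcomp Require Export mxtens.
Set Implicit Arguments. Unset Strict Implicit. Unset Printing Implicit Defensive.
Import Order.TTheory GRing.Theory Num.Theory.
Local Open Scope ring_scope.

Section Defs.
Variable R : realFieldType.

(* affine parameter dependence  M(p) = M0 + sum_i p_i M_i  (M i is M_{i+1}) *)
Definition affmx (np m n : nat) (M0 : 'M[R]_(m, n)) (M : 'I_np -> 'M[R]_(m, n))
  (p : 'cV[R]_np) : 'M[R]_(m, n) :=
  M0 + \sum_(i < np) p i 0 *: M i.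

(* Kbar = [K_1 ... K_np] : column index i*nx + j is column j of K_{i+1} *)
Definition Kbar (np nu nx : nat) (K : 'I_np -> 'M[R]_(nu, nx)) : 'M[R]_(nu, np * nx) :=
  \matrix_(r < nu, c < np * nx) K (mxtens_unindex c).1 r (mxtens_unindex c).2.

(* data matrices built from samples indexed 1..Nd; column j is sample j+1 *)
Definition dataU (nu Nd : nat) (ud : nat -> 'cV[R]_nu) : 'M[R]_(nu, Nd.-1) :=
  \matrix_(i < nu, j < Nd.-1) ud j.+1 i 0.
Definition dataX (nx Nd : nat) (xd : nat -> 'cV[R]_nx) : 'M[R]_(nx, Nd.-1) :=
  \matrix_(i < nx, j < Nd.-1) xd j.+1 i 0.
Definition dataXplus (nx Nd : nat) (xd : nat -> 'cV[R]_nx) : 'M[R]_(nx, Nd.-1) :=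
  \matrix_(i < nx, j < Nd.-1) xd j.+2 i 0.
Definition dataUp (np nu Nd : nat) (pd : nat -> 'cV[R]_np) (ud : nat -> 'cV[R]_nu)
  : 'M[R]_(np * nu, Nd.-1) :=
  \matrix_(i < np * nu, j < Nd.-1) (pd j.+1 *t ud j.+1) i 0.
Definition dataXp (np nx Nd : nat) (pd : nat -> 'cV[R]_np) (xd : nat -> 'cV[R]_nx)
  : 'M[R]_(np * nx, Nd.-1) :=
  \matrix_(i < np * nx, j < Nd.-1) (pd j.+1 *t xd j.+1) i 0.

Definition dataDp (np nx nu Nd : nat) (pd : nat -> 'cV[R]_np) (xd : nat -> 'cV[R]_nx)
  (ud : nat -> 'cV[R]_nu) : 'M[R]_(nx + (np * nx + (nu + np * nu)), Nd.-1) :=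
  col_mx (dataX Nd xd) (col_mx (dataXp Nd pd xd) (col_mx (dataU Nd ud) (dataUp Nd pd ud))).

Definition row3 (m n1 n2 n3 : nat) (A : 'M[R]_(m, n1)) (B : 'M[R]_(m, n2))
  (C : 'M[R]_(m, n3)) : 'M[R]_(m, n1 + (n2 + n3)) := row_mx A (row_mx B C).

Definition MCL (np nx nu : nat) (K0 : 'M[R]_(nu, nx)) (K : 'I_np -> 'M[R]_(nu, nx))
  : 'M[R]_(nx + (np * nx + (nu + np * nu)), nx + (np * nx + np * (np * nx))) :=
  col_mx (row3 (1%:M : 'M_nx) 0 0)
 (col_mx (row3 0 ((1%:M : 'M_np) *t (1%:M : 'M_nx)) 0)
 (col_mx (row3 K0 (Kbar K) 0)
         (row3 0 ((1%:M : 'M_np) *t K0) ((1%:M : 'M_np) *t Kbar K)))).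

End Defs.

(* Main.v *)
Require Import Defs.
From HB Require Import structures.
From mathcomp Require Import all_boot all_order all_algebra.
From mathcomp Require Import mxtens.
Import Order.TTheory GRing.Theory Num.Theory.
Local Open Scope ring_scope.

Lemma Kbar_tens (R : realFieldType) (np m n : nat) (M : 'I_np -> 'M[R]_(m, n))
  (p : 'cV[R]_np) (y : 'cV[R]_n) :
  Kbar M *m (p *t y) = \sum_(i < np) p i 0 *: (M i *m y).
Proof.
apply/matrixP => r c; rewrite !mxE summxE.
rewrite (reindex (@mxtens_index np n)) /=; last first.
  by exists (@mxtens_unindex np n) => k _; rewrite (mxtens_indexK, mxtens_unindexK).
symmetry; under eq_bigr do rewrite !mxE big_distrr.
rewrite pair_bigA /=; apply: eq_bigr => [[i j]] _ /=.
rewrite !mxE !mxtens_indexK /=.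
rewrite mulrCA; congr (_ * (p i _ * y j _)); apply: val_inj; by rewrite /= (ord1 c).
Qed.

Lemma aff_mul (R : realFieldType) (np m n k : nat) (M0 : 'M[R]_(m, n)) (M : 'I_np -> 'M[R]_(m, n))
  (p : 'cV[R]_np) (y : 'M[R]_(n,k)) :
  affmx M0 M p *m y = M0 *m y + \sum_(i < np) p i 0 *: (M i *m y).
Proof.
rewrite /affmx mulmxDl mulmx_suml; congr (_ + _); apply: eq_bigr => i _.
by rewrite scalemxAl.
Qed.

Lemma sum_mul (R : realFieldType) (np m n k : nat) (M : 'I_np -> 'M[R]_(m, n))
  (p : 'cV[R]_np) (y : 'M[R]_(n,k)) :
  (\sum_(i < np) p i 0 *: M i) *m y = \sum_(i < np) p i 0 *: (M i *m y).
Proof.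
rewrite mulmx_suml; apply: eq_bigr => i _.
by rewrite scalemxAl.
Qed.

Theorem theorem1 (R : realFieldType) (nx nu np Nd : nat)
  (P : 'cV[R]_np -> Prop)
  (A0 : 'M[R]_nx) (A : 'I_np -> 'M[R]_nx)
  (B0 : 'M[R]_(nx, nu)) (B : 'I_np -> 'M[R]_(nx, nu))
  (ud : nat -> 'cV[R]_nu) (pd : nat -> 'cV[R]_np) (xd : nat -> 'cV[R]_nx)
  (Hp : forall k, (1 <= k <= Nd)%N -> P (pd k))
  (Hsys : forall k, (1 <= k < Nd)%N ->
     xd k.+1 = affmx A0 A (pd k) *m xd k + affmx B0 B (pd k) *m ud k)
  (Hpe : \rank (dataDp Nd pd xd ud) = ((1 + np) * (nx + nu))%N)
  (K0 : 'M[R]_(nu, nx)) (K : 'I_np -> 'M[R]_(nu, nx))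
  (V : 'M[R]_(Nd.-1, nx + (np * nx + np * (np * nx))))
  (HV : MCL K0 K = dataDp Nd pd xd ud *m V) :
  forall (p : 'cV[R]_np) (x : 'cV[R]_nx), P p ->
    (affmx A0 A p + affmx B0 B p *m affmx K0 K p) *m x
    = dataXplus Nd xd *m V *m col_mx x (col_mx (p *t x) (p *t (p *t x))).
Proof.
move=> p x _.
set G := row_mx A0 (row_mx (Kbar A) (row_mx B0 (Kbar B))).
have HX : dataXplus Nd xd = G *m dataDp Nd pd xd ud.
  suff H : forall j, col j (dataXplus Nd xd) = col j (G *m dataDp Nd pd xd ud).
    by apply/matrixP => i j; move: (congr1 (fun M : 'cV[R]_nx => M i 0) (H j)); rewrite !mxE.
  move=> j.
  have Hj : (1 <= j.+1 < Nd)%N by case: j => /= j; case: (Nd) => //= n.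
  rewrite !colE -mulmxA -!colE /dataDp !col_col_mx.
  have -> : col j (dataXplus Nd xd) = xd j.+2.
    by apply/matrixP => a b; rewrite !mxE (ord1 b).
  have -> : col j (dataX Nd xd) = xd j.+1.
    by apply/matrixP => a b; rewrite !mxE (ord1 b).
  have -> : col j (dataU Nd ud) = ud j.+1.
    by apply/matrixP => a b; rewrite !mxE (ord1 b).
  have -> : col j (dataXp Nd pd xd) = pd j.+1 *t xd j.+1.
    by apply/matrixP => a b; rewrite !mxE (ord1 b).
  have -> : col j (dataUp Nd pd ud) = pd j.+1 *t ud j.+1.
    by apply/matrixP => a b; rewrite !mxE (ord1 b).
  rewrite /G !mul_row_col !Kbar_tens Hsys // !aff_mul.
  by rewrite !addrA.
rewrite HX -[G *m _ *m V]mulmxA -HV -mulmxA /MCL /G /row3 !mul_col_mx !mul_row_col.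
rewrite !mul0mx !addr0 !add0r !mul1mx !(@tensmx_mul R _ _ _ _ 1 1) !mul1mx.
rewrite !mulmxDr !Kbar_tens.
rewrite !mulmxDl -!mulmxA !sum_mul.
rewrite -!addrA; congr (_ + (_ + (_ + _))).
by rewrite addrCA.
Qed.
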